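(* Fix $a\in(0,1/2)$ and $b\in(0,1)$. There exist constants $c_1>0$ and $c_2>0$ (independent of $n$) such that for all sufficiently large $n$, the random-neighbor variant process on the complete graph $K_n$ with root $r$ satisfies $\Pr[\tau_{\mathrm{conv}}\ge c_2n]\ge c_1a$.
   Context: Random-neighbor variant. Fix $a,b\in[0,1]$, a connected graph $G=(V,E)$ and a root $r$. Labels $f_t:V\to\{+1,-1,\bot\}$ with $f_t(r)=+1$ for all $t$ and $f_0(v)=\bot$ for $v\ne r$. For $t\ge1$ and each $v\neq r$ independently, let $N_{t-1}(v)=\{u:(u,v)\in E,\ f_{t-1}(u)\ne\bot\}$. If $f_{t-1}(v)=\bot$ and $N_{t-1}(v)=\emptyset$, then $f_t(v)=\bot$. If $f_{t-1}(v)=\bot$ and $N_{t-1}(v)\neq\emptyset$, pick $w$ uniformly from $N_{t-1}(v)$ and set $f_t(v)=f_{t-1}(w)$ w.p. $1-a$ and $-f_{t-1}(w)$ w.p. $a$. If $f_{t-1}(v)\ne\bot$, pick $w$ uniformly at random from $N_{t-1}(v)$ (afresh every round) and set $f_t(v)=f_{t-1}(w)$ w.p. $b$ and $f_t(v)=f_{t-1}(v)$ w.p. $1-b$. The convergence time is $\tau_{\mathrm{conv}}=\min\{t: f_t(v)=+1\ \forall v\in V\}$. *)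

(* Defs.v *)
From HB Require Import structures.
From mathcomp Require Import all_boot all_order all_algebra.
From mathcomp Require Import reals.
Set Implicit Arguments. Unset Strict Implicit. Unset Printing Implicit Defensive.
Import Order.TTheory GRing.Theory Num.Theory.
Local Open Scope ring_scope.

(* Labels: [None] = ⊥ (unlabelled), [Some true] = +1, [Some false] = -1. *)
Definition label := option bool.
Definition lneg (l : label) : label := omap negb l.

Section RandomNeighbor.
Variables (R : realType) (a b : R).
Variables (V : finType) (adj : rel V) (r : V).

Definition state := {ffun V -> label}.

Definition nbrs (f : state) (v : V) : {set V} := [set u | adj u v & f u != None].

(* Root: always +1.  Otherwise:
   - N empty: label unchanged (f_{t-1}(v)=⊥ gives ⊥; a labelled vertex with
     empty labelled neighbourhood cannot occur, we let it keep its label);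
   - f(v)=⊥: w uniform in N, copy f(w) w.p. 1-a, flip it w.p. a;
   - f(v)≠⊥: w uniform in N, adopt f(w) w.p. b, keep f(v) w.p. 1-b. *)
Definition vertex_prob (f : state) (v : V) (l : label) : R :=
  if v == r then (l == Some true)%:R else
  let N := nbrs f v in
  if #|N| == 0%N then (l == f v)%:R else
  match f v with
  | None => \sum_(w in N) #|N|%:R^-1 *
              ((1 - a) * (l == f w)%:R + a * (l == lneg (f w))%:R)
  | Some _ => \sum_(w in N) #|N|%:R^-1 *
              (b * (l == f w)%:R + (1 - b) * (l == f v)%:R)
  end.

Definition trans (f g : state) : R := \prod_(v : V) vertex_prob f v (g v).

Definition init_state : state := [ffun v => if v == r then Some true else None].

Definition all_plus (f : state) : bool := [forall v, f v == Some true].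

(* surv T g = Pr[ f_T = g  and  f_t is not all +1 for every t < T ]. *)
Fixpoint surv (T : nat) : {ffun state -> R} :=
  match T with
  | 0%N => [ffun g => (g == init_state)%:R]
  | T'.+1 => [ffun g => \sum_(f : state | ~~ all_plus f) surv T' f * trans f g]
  end.

(* Pr[ tau_conv >= T ] for a natural T  (tau_conv = min{t : f_t all +1},
   = +oo if no such t): sum over g of surv T g. *)
Definition prob_tau_ge_nat (T : nat) : R := \sum_(g : state) surv T g.

(* Pr[ tau_conv >= x ] for a real threshold x: tau_conv is an integer, so
   the event is tau_conv >= ceil(x) (and is sure when x <= 0). *)
Definition prob_tau_ge (x : R) : R :=
  if x <= 0 then 1 else prob_tau_ge_nat `|Num.ceil x|%N.

End RandomNeighbor.

Definition complete_adj (n : nat) : rel 'I_n := fun u v => u != v.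

(* Main.v *)
Require Import Defs.
From HB Require Import structures.
From mathcomp Require Import all_boot all_order all_algebra.
From mathcomp Require Import reals.
From mathcomp Require Import ring lra.
Import Order.TTheory GRing.Theory Num.Theory.
Local Open Scope ring_scope.

Lemma sum_label (R : realType) (F : label -> R) :
  \sum_(l : label) F l = F None + F (Some true) + F (Some false).
Proof.
rewrite (bigD1 None) // (bigD1 (Some true)) // (bigD1 (Some false)) //= big1.
  by rewrite addr0 !addrA.
by case=> [[]|].
Qed.

Lemma sum_eq1 (R : realType) (x : label) : \sum_(l : label) ((l == x)%:R : R) = 1.
Proof. by rewrite sum_label; case: x => [[]|] /=; rewrite ?addr0 ?add0r. Qed.

Section Proc.
Variables (R : realType) (a b : R) (m : nat) (r : 'I_m.+1).
Hypotheses (ha0 : 0 <= a) (ha1 : a <= 1) (hb0 : 0 <= b) (hb1 : b <= 1) (hm : (0 < m)%N).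

Local Notation adj := (@complete_adj m.+1).
Local Notation vp := (vertex_prob a b adj r).
Local Notation tr := (trans a b adj r).
Local Notation sv := (surv a b adj r).
Local Notation init := (init_state r).

Lemma vp_ge0 f v l : 0 <= vp f v l.
Proof.
rewrite /vertex_prob; case: (v == r); first exact: ler0n.
case: (#|nbrs adj f v| == 0%N); first exact: ler0n.
case: (f v) => [s|]; apply: sumr_ge0 => w _; apply: mulr_ge0; rewrite ?invr_ge0 ?ler0n //;
  apply: addr_ge0; apply: mulr_ge0; rewrite ?ler0n ?subr_ge0 //.
Qed.

Lemma vp_sum1 f v : \sum_l vp f v l = 1.
Proof.
rewrite /vertex_prob; case: (v == r); first exact: sum_eq1.
case hN: (#|nbrs adj f v| == 0%N); first exact: sum_eq1.
have cN : #|nbrs adj f v|%:R != 0 :> R by rewrite pnatr_eq0 hN.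
case: (f v) => [s|]; rewrite exchange_big /=;
  (rewrite (eq_bigr (fun _ => #|nbrs adj f v|%:R^-1)); 
   [by rewrite sumr_const -[LHS]mulr_natr mulVf|
    move=> w _; rewrite -mulr_sumr big_split /= -!mulr_sumr !sum_eq1 ?mulr1; 
    by rewrite ?(addrC b) subrK mulr1]).
Qed.

Lemma tr_ge0 f g : 0 <= tr f g.
Proof. by apply: prodr_ge0 => v _; exact: vp_ge0. Qed.

Lemma sv_ge0 T g : 0 <= sv T g.
Proof.
elim: T g => [|T IH] g; rewrite ffunE; first exact: ler0n.
by apply: sumr_ge0 => f _; apply: mulr_ge0; [exact: IH|exact: tr_ge0].
Qed.

Lemma marginal f u x : \sum_g tr f g * (g u == x)%:R = vp f u x.
Proof.
pose F v l := if v == u then vp f v l * (l == x)%:R else vp f v l.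
have E g : tr f g * (g u == x)%:R = \prod_v F v (g v).
  rewrite /trans (bigD1 u) //= [RHS](bigD1 u) //= /F eqxx mulrAC; congr (_ * _).
  by apply: eq_bigr => v /negbTE ->.
rewrite (eq_bigr _ (fun g _ => E g)) -(bigA_distr_bigA F) (bigD1 u) //= [X in _ * X]big1.
  rewrite mulr1 /F eqxx (bigD1 x) //= eqxx mulr1 big1 ?addr0 // => l /negbTE ->.
  by rewrite mulr0.
by move=> v /negbTE hv; rewrite /F hv vp_sum1.
Qed.

Definition X (f : state 'I_m.+1) v : R := (f v == Some false)%:R.
Definition M (f : state 'I_m.+1) : R := \sum_v X f v.

Lemma expect f : \sum_g tr f g * M g = \sum_v vp f v (Some false).
Proof.
under eq_bigr => g _ do rewrite /M mulr_sumr /=.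
rewrite exchange_big /=; apply: eq_bigr => v _; exact: marginal.
Qed.


Definition good (f : state 'I_m.+1) := (f r == Some true) && [forall v, f v != None].

Lemma vp_None_zero f v : (f == init) || good f -> v != r -> vp f v None = 0.
Proof.
move=> hf hv.
have fr : f r = Some true.
  by case/orP: hf => [/eqP -> | /andP[/eqP -> _]] //; rewrite ffunE eqxx.
have rN : r \in nbrs adj f v by rewrite inE /complete_adj eq_sym hv fr.
have hN : (#|nbrs adj f v| == 0%N) = false.
  by apply/negbTE; rewrite -lt0n card_gt0; apply/set0Pn; exists r.
have fw w : w \in nbrs adj f v -> f w != None by rewrite inE => /andP[].
rewrite /vertex_prob (negbTE hv) hN.
case/orP: hf => [/eqP hfi | /andP[_ /forallP hall]].
  have fv : f v = None by rewrite hfi ffunE (negbTE hv).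
  rewrite fv big1 // => w /fw; case: (f w) => //= s _.
  by rewrite !mulr0 addr0 mulr0.
have := hall v; case: (f v) => // s _.
rewrite big1 // => w /fw; case: (f w) => //= t _.
by rewrite !mulr0 addr0 mulr0.
Qed.

Lemma trans_bad f g : (f == init) || good f -> ~~ good g -> tr f g = 0.
Proof.
move=> hf; rewrite /good negb_and => /orP[hr|/forallPn [v]].
  by rewrite /trans (bigD1 r) //= /vertex_prob eqxx (negbTE hr) mul0r.
rewrite negbK => /eqP hv; case: (eqVneq v r) => [evr|nvr].
  by rewrite /trans (bigD1 r) //= {1}/vertex_prob eqxx -evr hv mul0r.
by rewrite /trans (bigD1 v) //= hv vp_None_zero // mul0r.
Qed.

Lemma surv_bad T g : ~~ good g -> sv T.+1 g = 0.
Proof.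
elim: T g => [|T IH] g hg; rewrite ffunE big1 // => f _.
  rewrite ffunE; case hfi: (f == init); last by rewrite mul0r.
  by rewrite trans_bad ?hfi // mulr0.
case hgf: (good f); first by rewrite trans_bad ?hgf ?orbT // mulr0.
by rewrite IH ?hgf // mul0r.
Qed.

Lemma E_init : \sum_v vp init v (Some false) = a * m%:R.
Proof.
rewrite (bigD1 r) //= {1}/vertex_prob eqxx add0r.
rewrite (eq_bigr (fun _ => a)).
  by rewrite sumr_const cardC1 card_ord mulr_natr.
move=> v hv.
have N1 : nbrs adj init v = [set r].
  apply/setP => u; rewrite !inE /complete_adj ffunE.
  case: (eqVneq u r) => [->|hu] /=; first by rewrite eq_sym hv.
  by rewrite andbF.
rewrite /vertex_prob (negbTE hv) N1 cards1 /= ffunE (negbTE hv) big_set1 ffunE eqxx /=.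
by rewrite invr1 mul1r mulr0 add0r mulr1.
Qed.

Lemma E_good f : good f -> \sum_v vp f v (Some false) = (1 - b / m%:R) * M f.
Proof.
case/andP => /eqP fr /forallP hall.
have Xr : X f r = 0 by rewrite /X fr.
have hM : M f = \sum_(v | v != r) X f v by rewrite /M (bigD1 r) //= Xr add0r.
have m0 : m%:R != 0 :> R by rewrite pnatr_eq0 -lt0n.
have Nv v : v != r -> nbrs adj f v = [set~ v].
  by move=> hv; apply/setP => u; rewrite !inE /complete_adj (hall u) andbT.
have key v : v != r -> vp f v (Some false) = b / m%:R * (M f - X f v) + (1 - b) * X f v.
  move=> hv; rewrite /vertex_prob (negbTE hv) Nv // cardsC1 card_ord /=.
  have mn0 : (m == 0%N) = false by apply/negbTE; rewrite -lt0n.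
  rewrite mn0; have := hall v; case fv: (f v) => [s|] // _.
  rewrite (eq_bigr (fun w => m%:R^-1 * b * X f w + m%:R^-1 * ((1-b) * X f v))); last first.
    by move=> w _; rewrite /X fv (eq_sym (f w)) (eq_sym (Some s)) mulrDr mulrA.
  rewrite big_split /= -!mulr_sumr sumr_const cardsC1 card_ord.
  have -> : \sum_(w in [set~ v]) X f w = M f - X f v.
    rewrite /M [in RHS](bigD1 v) //= addrC addrK; apply: eq_bigl => w; by rewrite !inE.
  rewrite -mulr_natr; field; exact: m0.
rewrite (bigD1 r) //= {1}/vertex_prob eqxx /= add0r (eq_bigr _ key).
rewrite big_split /= -!mulr_sumr sumrB sumr_const -hM cardC1 card_ord.
rewrite -mulr_natr; field; exact: m0.
Qed.

Definition Y T := \sum_g sv T g * M g.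

Lemma Y_step T : Y T.+1 = \sum_(f | ~~ all_plus f) sv T f * \sum_v vp f v (Some false).
Proof.
rewrite /Y; under eq_bigr => g _ do rewrite ffunE mulr_suml.
rewrite exchange_big /=; apply: eq_bigr => f _; rewrite -expect mulr_sumr.
by apply: eq_bigr => g _; rewrite mulrA.
Qed.

Lemma M_allplus f : all_plus f -> M f = 0.
Proof. by move/forallP=> h; rewrite /M big1 // => v _; rewrite /X (eqP (h v)). Qed.

Lemma Y1 : Y 1 = a * m%:R.
Proof.
have [w hw] : exists w : 'I_m.+1, w != r.
  case: (eqVneq r ord0) => [->|h]; last by exists ord0; rewrite eq_sym.
  exists ord_max; apply/eqP => /(congr1 val) /= hm0; move: hm; by rewrite hm0.
have ni : ~~ all_plus init.
  by apply/forallP => /(_ w); rewrite ffunE (negbTE hw).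
rewrite Y_step (bigD1 init) //= ffunE eqxx mul1r E_init big1 ?addr0 //.
by move=> f /andP[_ hf]; rewrite ffunE (negbTE hf) mul0r.
Qed.

Lemma Y_rec T : Y T.+2 = (1 - b / m%:R) * Y T.+1.
Proof.
rewrite Y_step /Y [in RHS](bigID (@all_plus _)) /= [in RHS]big1 ?add0r; last first.
  by move=> f /M_allplus ->; rewrite mulr0.
rewrite mulr_sumr; apply: eq_bigr => f _.
case hg: (good f); first by rewrite E_good // mulrCA.
by rewrite surv_bad ?hg // !mul0r mulr0.
Qed.

Lemma Y_lb T : a * m%:R * (1 - T%:R * (b / m%:R)) <= Y T.+1.
Proof.
have m1 : 1 <= m%:R :> R by rewrite ler1n.
have q0 : 0 <= b / m%:R by rewrite divr_ge0.
have q1 : b / m%:R <= 1 by rewrite ler_pdivrMr ?mul1r ?(le_trans hb1) // (lt_le_trans ltr01).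
elim: T => [|T IH]; first by rewrite Y1 mul0r subr0 mulr1.
rewrite Y_rec; apply: le_trans (ler_wpM2l _ IH); last by rewrite subr_ge0.
set q := b / m%:R; rewrite -addn1 natrD.
have m0 : 0 <= m%:R :> R by [].
have h0 : 0 <= a * m%:R * T%:R * q * q.
  apply: mulr_ge0 => //; apply: mulr_ge0 => //; apply: mulr_ge0 => //; exact: mulr_ge0.
nra.
Qed.

Lemma S_ge T : Y T <= (m.+1)%:R * prob_tau_ge_nat a b adj r T.
Proof.
rewrite /prob_tau_ge_nat mulr_sumr /Y; apply: ler_sum => g _.
rewrite [_ * sv T g]mulrC; apply: ler_wpM2l; first exact: sv_ge0.
have : M g <= \sum_(v : 'I_m.+1) (1:R) by apply: ler_sum => v _; rewrite /X; case: (_ == _).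
by rewrite sumr_const card_ord.
Qed.

End Proc.

Theorem mainTheorem17 (R : realType) (a b : R) :
  0 < a < 2^-1 -> 0 < b < 1 ->
  exists c1 c2 : R, 0 < c1 /\ 0 < c2 /\
    exists N : nat, forall n : nat, (N <= n)%N -> forall r : 'I_n,
      c1 * a <= prob_tau_ge a b (@complete_adj n) r (c2 * n%:R).
Proof.
move=> /andP[a0 a2] /andP[b0 b1].
have a1 : a <= 1 by apply: le_trans (ltW a2) _; rewrite invf_le1 // ler1n.
exists 4^-1, 4^-1; split; first by rewrite invr_gt0.
split; first by rewrite invr_gt0.
exists 2%N; case=> [//|m]; rewrite ltnS => hm r.
set x := 4^-1 * m.+1%:R.
have xpos : 0 < x by rewrite mulr_gt0 // invr_gt0.
rewrite /prob_tau_ge ifF; last by apply/negbTE; rewrite -ltNge.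
have cpos : 0 < Num.ceil x by rewrite ceil_gt0.
have hT : (absz (Num.ceil x))%:Z = Num.ceil x := gez0_abs (ltW cpos).
have := ceil_itv x; rewrite -hT.
move: (absz (Num.ceil x)) hT => k hT.
case: k hT => [|T] hT; first by rewrite -hT in cpos.
have -> : (T.+1%:Z - 1) = T%:Z by rewrite -addn1 PoszD addrK.
move=> /andP[hTx _]; change (is_true (T%:R < x)) in hTx.
have Ylb := @Y_lb R a b m r (ltW a0) (ltW b0) (ltW b1) hm T.
have Sge := @S_ge R a b m r (ltW a0) a1 (ltW b0) (ltW b1) T.+1.
set S := prob_tau_ge_nat _ _ _ _ _ in Sge *.
set Yv := Y _ _ _ _ _ _ in Ylb Sge.
set mm := m%:R in Ylb Sge.
have m1 : 1 <= mm :> R by rewrite /mm ler1n.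
have hxm : x = 4^-1 * (mm + 1) by rewrite /x /mm natr1.
have hq : T%:R * (b / mm) <= 2^-1.
  rewrite mulrA ler_pdivrMr ?(lt_le_trans ltr01) //.
  have T0 : 0 <= T%:R :> R by [].
  rewrite hxm in hTx; nra.
have Y2 : a * mm * 2^-1 <= Yv.
  apply: le_trans Ylb; apply: ler_wpM2l; first by rewrite mulr_ge0 // ?ltW // (le_trans ler01 m1).
  lra.
have S0 : 0 <= S by rewrite /S /prob_tau_ge_nat; apply: sumr_ge0 => g _; exact: (@sv_ge0 R a b m r (ltW a0) a1 (ltW b0) (ltW b1)).
rewrite -natr1 -/mm in Sge.
nra.
Qed.
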